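(* Let $X$ be a real Hilbert space, let $\alpha\in\mathbb{R}\setminus\{0\}$ and $\beta>0$, equip $X\times X\times\mathbb{R}$ with the norm $\|(x,y,\gamma)\|=\sqrt{\|x\|^2+\|y\|^2+\beta^2|\gamma|^2}$, and let $C_\alpha=\{(x,y,\gamma)\in X\times X\times\mathbb{R}:\langle x,y\rangle=\alpha\gamma\}$. Then: (i) $C_\alpha$ is closed; if $X$ is infinite-dimensional, then $C_\alpha$ is not weakly closed, and in fact its weak closure is $X\times X\times\mathbb{R}$. (ii) $C_\alpha$ is prox-regular in $X\times X\times\mathbb{R}$; hence, for every point of $C_\alpha$ there exists a neighborhood on which the projection mapping $P_{C_\alpha}$ is single-valued.
   Context: $P_S(z)=\operatorname{argmin}_{w\in S}\|w-z\|$. A closed set $S$ is prox-regular (in the sense of Poliquin–Rockafellar–Thibault) if at every point of $S$ it is prox-regular, i.e., there exist $\varepsilon,r>0$ such that for all $x\in S$ near the point and all proximal normals $v$ to $S$ at $x$ with $\|v\|<\varepsilon$, one has $\langle v,x'-x\rangle\leq \frac{r}{2}\|x'-x\|^2$ for all $x'\in S$ near the point. *)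

(* Defs.v *)
From mathcomp Require Import all_boot all_algebra all_classical all_reals all_analysis.
Import GRing.Theory Num.Theory.
Set Implicit Arguments. Unset Strict Implicit. Unset Printing Implicit Defensive.
Local Open Scope ring_scope.
Local Open Scope classical_set_scope.

Section Defs.
Variables (R : realType) (X : completeNormedModType R).

(* A real Hilbert space is a complete normed space whose norm comes from an
   inner product: [inner] is a symmetric bilinear form with <x,x> = |x|^2. *)
Definition is_inner_product (inner : X -> X -> R) : Prop :=
  [/\ forall x y, inner x y = inner y x,
      forall (a : R) (x y z : X), inner (a *: x + y) z = a * inner x z + inner y z
    & forall x, inner x x = `|x| ^+ 2].

Definition infinite_dimensional : Prop :=
  forall n : nat, exists v : 'I_n -> X,
    forall c : 'I_n -> R, \sum_(i < n) c i *: v i = 0 -> forall i, c i = 0.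

Variables (inner : X -> X -> R) (beta : R).

Definition trip := (X * X * R)%type.

Definition tsub (u v : trip) : trip := (u.1.1 - v.1.1, u.1.2 - v.1.2, u.2 - v.2).
Definition tadd (u v : trip) : trip := (u.1.1 + v.1.1, u.1.2 + v.1.2, u.2 + v.2).
Definition tscale (a : R) (u : trip) : trip := (a *: u.1.1, a *: u.1.2, a * u.2).

Definition tnorm (u : trip) : R :=
  Num.sqrt (`|u.1.1| ^+ 2 + `|u.1.2| ^+ 2 + beta ^+ 2 * `|u.2| ^+ 2).

Definition tinner (u v : trip) : R :=
  inner u.1.1 v.1.1 + inner u.1.2 v.1.2 + beta ^+ 2 * (u.2 * v.2).

Definition tdist (u v : trip) : R := tnorm (tsub u v).

Definition tclosed (S : set trip) : Prop :=
  forall z, (forall e : R, 0 < e -> exists2 c, S c & tdist z c < e) -> S z.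

Definition cont_linear_functional (f : trip -> R) : Prop :=
  (forall (a : R) (u v : trip), f (tadd (tscale a u) v) = a * f u + f v) /\
  (forall z (e : R), 0 < e -> exists2 d : R, 0 < d &
      forall w, tdist w z < d -> `|f w - f z| < e).

(* weak closure: z is in the weak closure of S iff every basic weak
   neighbourhood {w | |f_i w - f_i z| < e, i < n} of z meets S *)
Definition weak_closure (S : set trip) : set trip :=
  [set z | forall (n : nat) (f : 'I_n -> trip -> R) (e : R),
      (forall i, cont_linear_functional (f i)) -> 0 < e ->
      exists2 c, S c & forall i, `|f i c - f i z| < e].

Definition weakly_closed (S : set trip) : Prop := weak_closure S `<=` S.

Definition metric_proj (S : set trip) (z : trip) : set trip :=
  [set p | S p /\ forall w, S w -> tdist p z <= tdist w z].

Definition proximal_normal (S : set trip) (x v : trip) : Prop :=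
  exists2 t : R, 0 < t & metric_proj S (tadd x (tscale t v)) x.

(* Poliquin-Rockafellar-Thibault prox-regularity at xb *)
Definition prox_regular_at (S : set trip) (xb : trip) : Prop :=
  exists (eps r delta : R), [/\ 0 < eps, 0 < r, 0 < delta &
    forall x v x', S x -> tdist x xb < delta ->
      proximal_normal S x v -> tnorm v < eps ->
      S x' -> tdist x' xb < delta ->
      tinner v (tsub x' x) <= r / 2 * tnorm (tsub x' x) ^+ 2].

Definition prox_regular (S : set trip) : Prop :=
  tclosed S /\ forall xb, S xb -> prox_regular_at S xb.

End Defs.

Definition C_alpha (R : realType) (X : completeNormedModType R)
  (inner : X -> X -> R) (alpha : R) : set (X * X * R)%type :=
  [set u | inner u.1.1 u.1.2 = alpha * u.2].

(* Main.v *)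
Require Import Defs.
From mathcomp Require Import all_boot all_algebra all_classical all_reals all_analysis.
From mathcomp Require Import ring lra.
Import GRing.Theory Num.Theory order.Order.TTheory.
Local Open Scope ring_scope.
Local Open Scope classical_set_scope.

Lemma ivt_root (R : realType) (ab S ac m e B j : R) : e = ab - ac -> 0 <= S -> 0 < m -> 0 < j -> j <= 1/4 ->
  `|ab| + 2 * `|ac| <= B -> j * B <= m / 4 -> `|e| < j * m / 4 ->
  exists2 k, `|k| <= j & ab * (1 + k ^+ 2) - k * S = (ac + k * m) * (1 - k ^+ 2) ^+ 2.
Proof.
move=> eE S0 m0 j0 j1 hB jB he.
pose Hf (k : R) := ab * (1 + k ^+ 2) - k * S - (ac + k * m) * (1 - k ^+ 2) ^+ 2.
pose Hp : {poly R} := ab%:P * (1 + 'X ^+ 2) - S%:P * 'X - (ac%:P + m%:P * 'X) * (1 - 'X ^+ 2) ^+ 2.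
have Hval : forall k, (- Hp).[k] = - Hf k.
  move=> k; rewrite /Hp /Hf !hornerE /=; ring.
set R1 := j ^+ 2 * ab + ac * j ^+ 2 * (2 - j ^+ 2).
have B0 : 0 <= B by have := normr_ge0 ab; have := normr_ge0 ac; lra.
have hR1 : `|R1| <= j * m / 4.
  have t1 : `|R1| <= j ^+ 2 * `|ab| + `|ac| * j ^+ 2 * 2.
    apply: (le_trans (ler_normD _ _)); rewrite !normrM (ger0_norm (ltW j0)) -expr2.
    apply: lerD => //; apply: ler_wpM2l; first by rewrite mulr_ge0 // exprn_ge0 // ltW.
    have hj2 : j ^+ 2 <= 1 by nra.
    have hj3 : 0 <= j ^+ 2 by rewrite exprn_ge0 // ltW.
    rewrite ger0_norm; lra.
  apply: (le_trans t1).
  have : j ^+ 2 * B <= j * (m / 4).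
    rewrite expr2 -mulrA ler_wpM2l ?(ltW j0) //.
  have : j ^+ 2 * (`|ab| + 2 * `|ac|) <= j ^+ 2 * B by rewrite ler_wpM2l // exprn_ge0 // ltW.
  lra.
have hq : 1 / 2 <= (1 - j ^+ 2) ^+ 2.
  have : j ^+ 2 <= 1 / 16 by nra.
  have : 0 <= j ^+ 2 by rewrite exprn_ge0 // ltW.
  nra.
have Hj : Hf j = e + R1 - j * S - j * m * (1 - j ^+ 2) ^+ 2 by rewrite /Hf /R1 eE; ring.
have Hmj : Hf (- j) = e + R1 + j * S + j * m * (1 - j ^+ 2) ^+ 2 by rewrite /Hf /R1 eE; ring.
have jS : 0 <= j * S by rewrite mulr_ge0 // ltW.
have jm : j * m / 2 <= j * m * (1 - j ^+ 2) ^+ 2.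
  have : 0 <= j * m by rewrite mulr_ge0 // ltW.
  nra.
have /andP [n1 n2] : - (j * m / 4) <= R1 <= j * m / 4 by rewrite -ler_norml.
have /andP [e1 e2] : - (j * m / 4) < e < j * m / 4 by rewrite -ltr_norml.
have a1 : (- Hp).[- j] <= 0 by rewrite Hval Hmj; lra.
have a2 : 0 <= (- Hp).[j] by rewrite Hval Hj; lra.
have jj : - j <= j by lra.
have [k /andP [k1 k2] rk] := poly_ivt jj (introT andP (conj a1 a2)).
exists k; first by rewrite ler_norml k1 k2.
move: rk; rewrite /root Hval oppr_eq0 /Hf subr_eq0 => /eqP //.
Qed.

Section Main.
Variables (R : realType) (X : completeNormedModType R) (inner : X -> X -> R) (alpha beta : R).
Hypotheses (Hin : is_inner_product inner) (Ha : alpha != 0) (Hb : 0 < beta).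
Local Notation T3 := (X * X * R)%type.

Lemma inC x y : inner x y = inner y x.
Proof. by case: Hin. Qed.
Lemma inL a x y z : inner (a *: x + y) z = a * inner x z + inner y z.
Proof. by case: Hin. Qed.
Lemma inN x : inner x x = `|x| ^+ 2.
Proof. by case: Hin. Qed.
Lemma in0l z : inner 0 z = 0.
Proof. have := inL 1 0 0 z; rewrite scaler0 addr0 mul1r => h; lra. Qed.
Lemma inDl x y z : inner (x + y) z = inner x z + inner y z.
Proof. by rewrite -[x]scale1r inL mul1r scale1r. Qed.
Lemma inZl a x z : inner (a *: x) z = a * inner x z.
Proof. by rewrite -[a *: x]addr0 inL in0l addr0. Qed.
Lemma inNl x z : inner (- x) z = - inner x z.
Proof. by rewrite -scaleN1r inZl mulN1r. Qed.
Lemma inBl x y z : inner (x - y) z = inner x z - inner y z.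
Proof. by rewrite inDl inNl. Qed.
Lemma in0r z : inner z 0 = 0.
Proof. by rewrite inC in0l. Qed.
Lemma inDr x y z : inner z (x + y) = inner z x + inner z y.
Proof. by rewrite inC inDl !(inC z). Qed.
Lemma inZr a x z : inner z (a *: x) = a * inner z x.
Proof. by rewrite inC inZl inC. Qed.
Lemma inNr x z : inner z (- x) = - inner z x.
Proof. by rewrite inC inNl inC. Qed.
Lemma inBr x y z : inner z (x - y) = inner z x - inner z y.
Proof. by rewrite inDr inNr. Qed.

Lemma sqD u v : `|u + v| ^+ 2 = `|u| ^+ 2 + 2 * inner u v + `|v| ^+ 2.
Proof. rewrite -!inN inDl !inDr (inC v u); ring. Qed.
Lemma sqB u v : `|u - v| ^+ 2 = `|u| ^+ 2 - 2 * inner u v + `|v| ^+ 2.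
Proof. by rewrite sqD inNr normrN; ring. Qed.
Lemma sqZ (a : R) (u : X) : `|a *: u| ^+ 2 = a ^+ 2 * `|u| ^+ 2.
Proof. by rewrite -!inN inZl inZr; ring. Qed.

Lemma CS u w : `|inner u w| <= `|u| * `|w|.
Proof.
have [u0|unz] := eqVneq u 0.
  by rewrite u0 in0l normr0 normr0 mul0r.
have A0 : 0 < `|u| ^+ 2 by rewrite exprn_gt0 // normr_gt0.
set p := inner u w.
have h : 0 <= `|(- p / `|u| ^+ 2) *: u + w| ^+ 2 by rewrite exprn_ge0.
rewrite sqD sqZ inZl -/p in h.
have h2 : p ^+ 2 <= (`|u| * `|w|) ^+ 2.
  have e : (- p / `|u| ^+ 2) ^+ 2 * `|u| ^+ 2 + 2 * (- p / `|u| ^+ 2 * p) + `|w| ^+ 2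
     = `|w| ^+ 2 - p ^+ 2 / `|u| ^+ 2.
    by field; rewrite normr_eq0.
  rewrite e subr_ge0 ler_pdivrMr // in h.
  by rewrite exprMn mulrC.
have hc : 0 <= `|u| * `|w| by rewrite mulr_ge0.
rewrite ler_norml; apply/andP; split; nra.
Qed.


Definition tsq (u : T3) : R := `|u.1.1| ^+ 2 + `|u.1.2| ^+ 2 + beta ^+ 2 * u.2 ^+ 2.
Lemma nR2 (r : R) : `|r| ^+ 2 = r ^+ 2.
Proof. by rewrite real_normK // num_real. Qed.
Lemma tnormE (u : T3) : tnorm beta u = Num.sqrt (tsq u).
Proof. by rewrite /tnorm nR2. Qed.
Lemma tsq_ge0 (u : T3) : 0 <= tsq u.
Proof.
rewrite /tsq; have h1 := exprn_ge0 2 (normr_ge0 u.1.1).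
have h2 := exprn_ge0 2 (normr_ge0 u.1.2).
have h3 : 0 <= beta ^+ 2 * u.2 ^+ 2 by rewrite mulr_ge0 // sqr_ge0.
lra.
Qed.
Lemma tnorm_ge0 (u : T3) : 0 <= tnorm beta u.
Proof. by rewrite tnormE sqrtr_ge0. Qed.
Lemma tnorm_sq (u : T3) : tnorm beta u ^+ 2 = tsq u.
Proof. by rewrite tnormE sqr_sqrtr // tsq_ge0. Qed.
Lemma comp1 (u : T3) : `|u.1.1| <= tnorm beta u.
Proof.
rewrite tnormE -(ger0_norm (normr_ge0 u.1.1)) -sqrtr_sqr ler_sqrt; last exact: tsq_ge0.
rewrite /tsq; have h2 := exprn_ge0 2 (normr_ge0 u.1.2).
have h3 : 0 <= beta ^+ 2 * u.2 ^+ 2 by rewrite mulr_ge0 // sqr_ge0.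
lra.
Qed.
Lemma comp2 (u : T3) : `|u.1.2| <= tnorm beta u.
Proof.
rewrite tnormE -(ger0_norm (normr_ge0 u.1.2)) -sqrtr_sqr ler_sqrt; last exact: tsq_ge0.
rewrite ?normr_id /tsq; have h2 := exprn_ge0 2 (normr_ge0 u.1.1).
have h3 : 0 <= beta ^+ 2 * u.2 ^+ 2 by rewrite mulr_ge0 // sqr_ge0.
lra.
Qed.
Lemma comp3 (u : T3) : beta * `|u.2| <= tnorm beta u.
Proof.
have hb : 0 <= beta * `|u.2| by rewrite mulr_ge0 // ltW.
rewrite tnormE -(ger0_norm hb) -sqrtr_sqr ler_sqrt; last exact: tsq_ge0.
rewrite /tsq exprMn nR2; have h2 := exprn_ge0 2 (normr_ge0 u.1.1).
have h1 := exprn_ge0 2 (normr_ge0 u.1.2).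
lra.
Qed.
Lemma comp3' (u : T3) : `|u.2| <= tnorm beta u / beta.
Proof. by rewrite ler_pdivlMr // mulrC comp3. Qed.

Definition F (u : T3) : R := inner u.1.1 u.1.2 - alpha * u.2.
Definition L (v : T3) : R := `|v.1.2| + 1 + `|v.1.1| + `|alpha| / beta.

Lemma Flip (u v : T3) : tdist beta u v <= 1 -> `|F u - F v| <= tdist beta u v * L v.
Proof.
move=> d1; set d := tdist beta u v in d1 *.
have h1 : `|u.1.1 - v.1.1| <= d by exact: (comp1 (tsub u v)).
have h2 : `|u.1.2 - v.1.2| <= d by exact: (comp2 (tsub u v)).
have h3 : `|u.2 - v.2| <= d / beta by exact: (comp3' (tsub u v)).
have d0 : 0 <= d by exact: tnorm_ge0.
have e : F u - F v = inner (u.1.1 - v.1.1) u.1.2 + inner v.1.1 (u.1.2 - v.1.2) - alpha * (u.2 - v.2).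
  by rewrite /F inBl inBr; ring.
have hu : `|u.1.2| <= `|v.1.2| + 1.
  have e2 : v.1.2 + (u.1.2 - v.1.2) = u.1.2 by rewrite addrC subrK.
  have := ler_normD v.1.2 (u.1.2 - v.1.2); rewrite e2 => h; lra.
have t1 : `|u.1.1 - v.1.1| * `|u.1.2| <= d * (`|v.1.2| + 1) by rewrite ler_pM.
have t2 : `|v.1.1| * `|u.1.2 - v.1.2| <= `|v.1.1| * d by rewrite ler_wpM2l.
have t3 : `|alpha| * `|u.2 - v.2| <= `|alpha| * (d / beta) by rewrite ler_wpM2l.
have c1 := CS (u.1.1 - v.1.1) u.1.2.
have c2 := CS v.1.1 (u.1.2 - v.1.2).
have n1 := ler_normB (inner (u.1.1 - v.1.1) u.1.2 + inner v.1.1 (u.1.2 - v.1.2)) (alpha * (u.2 - v.2)).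
have n2 := ler_normD (inner (u.1.1 - v.1.1) u.1.2) (inner v.1.1 (u.1.2 - v.1.2)).
rewrite normrM in n1.
have eL : d * L v = d * (`|v.1.2| + 1) + `|v.1.1| * d + `|alpha| * (d / beta) by rewrite /L; ring.
rewrite e eL; lra.
Qed.


Lemma tdistC (u v : T3) : tdist beta u v = tdist beta v u.
Proof.
rewrite /tdist !tnormE /tsq /= -(opprB u.1.1) -(opprB u.1.2) -(opprB u.2).
by rewrite !normrN sqrrN.
Qed.

Lemma small_eq0 (x K : R) : 0 < K -> (forall e, 0 < e -> e <= 1 -> `|x| <= e * K) -> x = 0.
Proof.
move=> K0 H; apply/normr0_eq0/eqP; rewrite eq_le normr_ge0 andbT.
rewrite leNgt; apply/negP => x0.
have d0 : 0 < `|x| + K by rewrite addr_gt0.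
have := H (`|x| / (`|x| + K)); rewrite divr_gt0 // ler_pdivrMr // mul1r.
have -> : `|x| <= `|x| + K by rewrite lerDl ltW.
move=> /(_ isT isT); rewrite mulrAC ler_pdivlMr // => h.
have : `|x| * (`|x| + K) <= `|x| * K by [].
nra.
Qed.

Definition C := C_alpha inner alpha.

Lemma closedC : tclosed beta C.
Proof.
move=> z Hz.
suff : F z = 0 by rewrite /F /C /C_alpha /= => /eqP; rewrite subr_eq0 => /eqP.
have L0 : 0 < L z.
  rewrite /L; have := normr_ge0 z.1.2; have := normr_ge0 z.1.1.
  have : 0 <= `|alpha| / beta by rewrite divr_ge0 // ltW.
  lra.
apply: (@small_eq0 (F z) (L z) L0) => e e0 e1.
have [c Cc dc] := Hz e e0.
have Fc : F c = 0 by rewrite /F Cc subrr.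
have dc' : tdist beta c z <= 1 by rewrite tdistC; lra.
have := @Flip c z dc'; rewrite Fc sub0r normrN => h.
apply: (le_trans h); rewrite ler_pM2r // tdistC; lra.
Qed.

Lemma scal (A K : R) : 0 <= K -> (forall s, 0 <= s * A + s ^+ 2 * K) -> A = 0.
Proof.
move=> K0 H; have K1 : 0 < K + 1 by lra.
have := H (- A / (K + 1)).
have -> : - A / (K + 1) * A + (- A / (K + 1)) ^+ 2 * K = - (A ^+ 2 / (K + 1) ^+ 2).
  by field; rewrite lt0r_neq0.
rewrite oppr_ge0 => h.
have h2 : 0 <= A ^+ 2 / (K + 1) ^+ 2 by rewrite divr_ge0 // sqr_ge0.
have : A ^+ 2 / (K + 1) ^+ 2 = 0 by apply/eqP; rewrite eq_le h h2.
move/eqP; rewrite mulf_eq0 invr_eq0 !expf_eq0 /= (negbTE (lt0r_neq0 K1)) orbF.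
by move/eqP.
Qed.

Lemma sq_le {u w z : T3} : tdist beta u z <= tdist beta w z -> tsq (tsub u z) <= tsq (tsub w z).
Proof. by rewrite /tdist !tnormE ler_sqrt // tsq_ge0. Qed.

Lemma eqle (a b : R) : a = b -> a <= b. Proof. by move=> ->. Qed.

Lemma first_order (z p : T3) : metric_proj beta C z p ->
  p.1.1 - z.1.1 = - ((beta ^+ 2 * (p.2 - z.2) / alpha) *: p.1.2) /\
  p.1.2 - z.1.2 = - ((beta ^+ 2 * (p.2 - z.2) / alpha) *: p.1.1).
Proof.
case: p => [[x y] g]; case: z => [[a b] c] /=; set k := beta ^+ 2 * (g - c) / alpha.
rewrite /metric_proj /C /C_alpha /= => -[Cp Hmin]; split.
- set r := x - a + k *: y.
  have hr : `|r| ^+ 2 = inner (x - a) r + k * inner r y.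
    by rewrite -inN {1}/r inDl inZl (inC y).
  suff : 2 * `|r| ^+ 2 = 0.
    move/eqP; rewrite mulf_eq0 pnatr_eq0 /= expf_eq0 /= normr_eq0 addr_eq0.
    by move/eqP.
  apply: (@scal (2 * `|r| ^+ 2) (`|r| ^+ 2 + beta ^+ 2 * (inner r y / alpha) ^+ 2)).
    by apply: addr_ge0; [exact: sqr_ge0 | apply: mulr_ge0; exact: sqr_ge0].
  move=> s.
  pose w : T3 := ((x + s *: r, y), inner (x + s *: r) y / alpha).
  have Cw : C w by rewrite /C /C_alpha /w /= mulrC divfK.
  have := sq_le (Hmin w Cw); rewrite /tsq /= -subr_ge0.
  have -> : x + s *: r - a = (x - a) + s *: r by rewrite addrAC.
  rewrite sqD sqZ inZr (inDl x (s *: r) y) inZl Cp.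
  rewrite hr /k => h; apply: (le_trans h); apply: eqle; field => //.
- set r2 := y - b + k *: x.
  have hr : `|r2| ^+ 2 = inner (y - b) r2 + k * inner x r2.
    by rewrite -inN {1}/r2 inDl inZl.
  suff : 2 * `|r2| ^+ 2 = 0.
    move/eqP; rewrite mulf_eq0 pnatr_eq0 /= expf_eq0 /= normr_eq0 addr_eq0.
    by move/eqP.
  apply: (@scal (2 * `|r2| ^+ 2) (`|r2| ^+ 2 + beta ^+ 2 * (inner x r2 / alpha) ^+ 2)).
    by apply: addr_ge0; [exact: sqr_ge0 | apply: mulr_ge0; exact: sqr_ge0].
  move=> s.
  pose w : T3 := ((x, y + s *: r2), inner x (y + s *: r2) / alpha).
  have Cw : C w by rewrite /C /C_alpha /w /= mulrC divfK.
  have := sq_le (Hmin w Cw); rewrite /tsq /= -subr_ge0.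
  have -> : y + s *: r2 - b = (y - b) + s *: r2 by rewrite addrAC.
  rewrite (sqD (y - b) (s *: r2)) sqZ inZr (inDr y (s *: r2) x) inZr Cp.
  rewrite hr /k => h; apply: (le_trans h); apply: eqle; field => //.
Qed.


Lemma proxC : prox_regular inner beta C.
Proof.
split; first exact: closedC.
move=> xb Cxb; have a0 : 0 < `|alpha| by rewrite normr_gt0.
exists 1, (beta / `|alpha|), 1; split => //; first by rewrite divr_gt0.
case=> [[x1 x2] x3] [[v1 v2] v3] [[y1 y2] y3].
rewrite /C /C_alpha /= => Cx _ [t t0 Hp] nv Cy _.
have := first_order _ _ Hp; rewrite /=.
set k := beta ^+ 2 * (x3 - (x3 + t * v3)) / alpha.
rewrite !opprD !addrA !subrr !add0r => -[/oppr_inj e1 /oppr_inj e2].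
set D1 := y1 - x1; set D2 := y2 - x2; set D3 := y3 - x3.
have i1 : t * inner v1 D1 = k * inner x2 D1 by rewrite -!inZl e1.
have i2 : t * inner v2 D2 = k * inner x1 D2 by rewrite -!inZl e2.
have Hd3 : alpha * D3 = inner x2 D1 + inner x1 D2 + inner D1 D2.
  rewrite /D3 mulrBr -Cx -Cy /D1 /D2 !inBl !inBr (inC x2 y1) (inC x2 x1); ring.
rewrite /tinner /=.
have tn0 : t != 0 by rewrite lt0r_neq0.
have -> : inner v1 D1 = k / t * inner x2 D1.
  transitivity (t^-1 * (t * inner v1 D1)); first by field.
  by rewrite i1; field.
have -> : inner v2 D2 = k / t * inner x1 D2.
  transitivity (t^-1 * (t * inner v2 D2)); first by field.
  by rewrite i2; field.
have d3E : D3 = (inner x2 D1 + inner x1 D2 + inner D1 D2) / alpha.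
  by rewrite -Hd3; field.
set P := inner D1 D2.
have -> : k / t * inner x2 D1 + k / t * inner x1 D2 + beta ^+ 2 * (v3 * D3)
   = beta * (beta * v3) * P / alpha.
  by rewrite d3E /k /P; field; rewrite Ha tn0.
rewrite tnorm_sq /tsq /= -/D1 -/D2 -/D3.
have hv : beta * `|v3| <= 1.
  have := comp3 ((v1, v2), v3); rewrite /=; lra.
have hP : `|P| <= (`|D1| ^+ 2 + `|D2| ^+ 2) / 2.
  have := CS D1 D2; rewrite -/P => h.
  have := sqr_ge0 (`|D1| - `|D2|); nra.
have h3 : 0 <= beta ^+ 2 * D3 ^+ 2 by rewrite mulr_ge0 // sqr_ge0.
apply: (le_trans (ler_norm _)).
rewrite !normrM normfV (gtr0_norm Hb).
have h4 : beta * `|v3| * `|P| <= (`|D1| ^+ 2 + `|D2| ^+ 2) / 2.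
  apply: (le_trans _ hP); rewrite -[X in _ <= X]mul1r; apply: ler_wpM2r => //.
have -> : beta * (beta * `|v3|) * `|P| * `|alpha|^-1 = beta / `|alpha| * (beta * `|v3| * `|P|) by ring.
have -> : beta / `|alpha| / 2 * (`|D1| ^+ 2 + `|D2| ^+ 2 + beta ^+ 2 * D3 ^+ 2)
  = beta / `|alpha| * ((`|D1| ^+ 2 + `|D2| ^+ 2 + beta ^+ 2 * D3 ^+ 2) / 2) by ring.
apply: ler_wpM2l; first by rewrite divr_ge0 // ltW.
lra.
Qed.


Lemma proj_ok (z p : T3) (k : R) : C p -> `|k| < 1 ->
  p.1.1 - z.1.1 = - (k *: p.1.2) -> p.1.2 - z.1.2 = - (k *: p.1.1) ->
  p.2 - z.2 = k * alpha / beta ^+ 2 ->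
  metric_proj beta C z p /\ forall q, metric_proj beta C z q -> q = p.
Proof.
case: p => [[x y] g]; case: z => [[a b] c]; rewrite /C /C_alpha /= => Cp k1 e1 e2 e3.
have b0 : beta != 0 by rewrite lt0r_neq0.
have key : forall w : T3, C w -> tsq (tsub w ((a, b), c)) - tsq (tsub ((x, y), g) ((a, b), c)) =
   `|w.1.1 - x| ^+ 2 + `|w.1.2 - y| ^+ 2 + beta ^+ 2 * (w.2 - g) ^+ 2
   + 2 * k * inner (w.1.1 - x) (w.1.2 - y).
  case=> [[w1 w2] w3]; rewrite /C /C_alpha /tsq /= => Cw.
  have -> : w1 - a = (w1 - x) + (x - a) by rewrite addrA subrK.
  have -> : w2 - b = (w2 - y) + (y - b) by rewrite addrA subrK.
  have -> : w3 - c = (w3 - g) + (g - c) by rewrite addrA subrK.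
  rewrite (sqD (w1 - x)) (sqD (w2 - y)) e1 e2 e3 !inNr !inZr.
  have H : alpha * (w3 - g) = inner (w1 - x) y + inner x (w2 - y) + inner (w1 - x) (w2 - y).
    rewrite mulrBr -Cw -Cp !inBl !inBr; ring.
  have w3E : w3 - g = (inner (w1 - x) y + inner x (w2 - y) + inner (w1 - x) (w2 - y)) / alpha.
    by rewrite -H; field.
  by rewrite w3E (inC (w2 - y) x); field; rewrite Ha b0.
have low : forall w : T3, C w -> (1 - `|k|) * (`|w.1.1 - x| ^+ 2 + `|w.1.2 - y| ^+ 2) + beta ^+ 2 * (w.2 - g) ^+ 2
    <= tsq (tsub w ((a, b), c)) - tsq (tsub ((x, y), g) ((a, b), c)).
  move=> w Cw; rewrite key //.
  set D1 := w.1.1 - x; set D2 := w.1.2 - y; set I := inner D1 D2.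
  have hI : `|I| <= (`|D1| ^+ 2 + `|D2| ^+ 2) / 2.
    have := CS D1 D2; rewrite -/I => h.
    have := sqr_ge0 (`|D1| - `|D2|); nra.
  have hkI : - (k * I) <= `|k| * `|I| by rewrite -normrM -normrN ler_norm.
  have hk0 := normr_ge0 k.
  have : `|k| * `|I| <= `|k| * ((`|D1| ^+ 2 + `|D2| ^+ 2) / 2) by rewrite ler_wpM2l.
  lra.
have Cp' : C ((x, y), g) by [].
split.
  split => // w Cw; rewrite /tdist !tnormE ler_sqrt ?tsq_ge0 // -subr_ge0.
  apply: le_trans (low w Cw).
  apply: addr_ge0; last by rewrite mulr_ge0 ?sqr_ge0.
  by apply: mulr_ge0; [lra | apply: addr_ge0; apply: sqr_ge0].
case=> [[q1 q2] q3] [Cq Hq].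
have h1 := sq_le (Hq _ Cp').
have := low _ Cq; rewrite /= => h2.
have t1 : 0 <= (1 - `|k|) * (`|q1 - x| ^+ 2 + `|q2 - y| ^+ 2).
  by apply: mulr_ge0; [lra | apply: addr_ge0; apply: sqr_ge0].
have t2 : 0 <= beta ^+ 2 * (q3 - g) ^+ 2 by rewrite mulr_ge0 ?sqr_ge0.
have s1 : (1 - `|k|) * (`|q1 - x| ^+ 2 + `|q2 - y| ^+ 2) = 0 by lra.
have s2 : beta ^+ 2 * (q3 - g) ^+ 2 = 0 by lra.
move: s1 s2; move/eqP; rewrite mulf_eq0 subr_eq0 => /orP [/eqP k1'|]; first by move: k1; rewrite -k1' ltxx.
rewrite paddr_eq0 ?sqr_ge0 // !expf_eq0 /= !normr_eq0 !subr_eq0 => /andP [/eqP -> /eqP ->].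
move/eqP; rewrite mulf_eq0 !expf_eq0 /= (negbTE b0) /= subr_eq0 => /eqP -> //.
Qed.


Lemma proj_exists (xb : T3) : C xb -> exists2 delta : R, 0 < delta &
  forall z : T3, tdist beta z xb < delta ->
  exists p, metric_proj beta C z p /\ forall q, metric_proj beta C z q -> q = p.
Proof.
move=> Cxb; have b0 : beta != 0 by rewrite lt0r_neq0.
have a0 : 0 < `|alpha| by rewrite normr_gt0.
set m := alpha ^+ 2 / beta ^+ 2.
have m0 : 0 < m by apply: divr_gt0; [rewrite -nR2 exprn_gt0 | rewrite exprn_gt0].
set B0 := (`|xb.1.1| + 1) * (`|xb.1.2| + 1) + 2 * (`|alpha| * (`|xb.2| + 1 / beta)).
have B00 : 0 <= B0.
  rewrite /B0; apply: addr_ge0; first by apply: mulr_ge0; apply: addr_ge0.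
  apply: mulr_ge0 => //; apply: mulr_ge0; first exact: ltW.
  by apply: addr_ge0 => //; rewrite divr_ge0 // ltW.
set j := m / (4 * (B0 + m) + 1).
have den0 : 0 < 4 * (B0 + m) + 1 by lra.
have j0 : 0 < j by rewrite divr_gt0.
have j1 : j <= 1 / 4 by rewrite /j ler_pdivrMr //; lra.
have jB : j * B0 <= m / 4.
  rewrite /j mulrAC ler_pdivrMr //.
  have E : m / 4 * (4 * (B0 + m) + 1) = m * B0 + (m * m + m / 4) by field.
  rewrite E; have : 0 <= m * m by rewrite mulr_ge0 // ltW.
  lra.
set L0 := L xb.
have L00 : 0 < L0.
  rewrite /L0 /L; have := normr_ge0 xb.1.2; have := normr_ge0 xb.1.1.
  have : 0 <= `|alpha| / beta by rewrite divr_ge0 // ltW.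
  lra.
set d1 := j * m / (4 * (L0 + 1)).
have d10 : 0 < d1.
  apply: divr_gt0; first by apply: mulr_gt0.
  lra.
exists (d1 / (1 + d1)); first by rewrite divr_gt0 //; lra.
move=> z; set d := tdist beta z xb => dz.
have d0 : 0 <= d by exact: tnorm_ge0.
have dd1 : d <= 1.
  apply: ltW; apply: (lt_le_trans dz); rewrite ler_pdivrMr; lra.
have dd2 : d <= d1.
  apply: ltW; apply: (lt_le_trans dz); rewrite ler_pdivrMr; [nra | lra].
have Fxb : F xb = 0 by rewrite /F Cxb subrr.
have he : `|F z| < j * m / 4.
  have := @Flip z xb dd1; rewrite Fxb subr0 -/d -/L0 => h.
  apply: (le_lt_trans h); apply: (le_lt_trans (y := d1 * L0)).
    by rewrite ler_pM2r.
  have E : j * m / 4 - d1 * L0 = j * m / (4 * (L0 + 1)) by rewrite /d1; field; lra.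
  have : 0 < j * m / (4 * (L0 + 1)) by apply: divr_gt0; [apply: mulr_gt0 | lra].
  lra.
have ha : `|z.1.1| <= `|xb.1.1| + 1.
  have h : `|z.1.1 - xb.1.1| <= d := comp1 (tsub z xb).
  have e2 : xb.1.1 + (z.1.1 - xb.1.1) = z.1.1 by rewrite addrC subrK.
  have := ler_normD xb.1.1 (z.1.1 - xb.1.1); rewrite e2; lra.
have hb : `|z.1.2| <= `|xb.1.2| + 1.
  have h : `|z.1.2 - xb.1.2| <= d := comp2 (tsub z xb).
  have e2 : xb.1.2 + (z.1.2 - xb.1.2) = z.1.2 by rewrite addrC subrK.
  have := ler_normD xb.1.2 (z.1.2 - xb.1.2); rewrite e2; lra.
have hc : `|z.2| <= `|xb.2| + 1 / beta.
  have h : `|z.2 - xb.2| <= d / beta := comp3' (tsub z xb).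
  have h' : d / beta <= 1 / beta by rewrite ler_pM2r ?invr_gt0.
  have e2 : xb.2 + (z.2 - xb.2) = z.2 by rewrite addrC subrK.
  have := ler_normD xb.2 (z.2 - xb.2); rewrite e2; lra.
have hB : `|inner z.1.1 z.1.2| + 2 * `|alpha * z.2| <= B0.
  have t1 : `|inner z.1.1 z.1.2| <= (`|xb.1.1| + 1) * (`|xb.1.2| + 1).
    by apply: (le_trans (CS _ _)); apply: ler_pM.
  have t2 : `|alpha * z.2| <= `|alpha| * (`|xb.2| + 1 / beta).
    by rewrite normrM ler_wpM2l.
  rewrite /B0; lra.
have S0 : 0 <= `|z.1.1| ^+ 2 + `|z.1.2| ^+ 2 by apply: addr_ge0; apply: sqr_ge0.
have [k kj Hroot] := @ivt_root R (inner z.1.1 z.1.2) (`|z.1.1| ^+ 2 + `|z.1.2| ^+ 2) (alpha * z.2) m (F z) B0 j (erefl _) S0 m0 j0 j1 hB jB he.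
have k1 : `|k| < 1 by lra.
have k2 : 1 - k ^+ 2 != 0.
  have : k ^+ 2 < 1 by (rewrite -nR2 expr2; have := normr_ge0 k; nra).
  move=> h; apply/eqP => h2; move: h; lra.
set i := (1 - k ^+ 2)^-1; set c := - (i * k).
set a := z.1.1; set b := z.1.2.
set px := i *: a + c *: b; set py := c *: a + i *: b; set pg := z.2 + k * alpha / beta ^+ 2.
have Cp : C ((px, py), pg).
  rewrite /C /C_alpha /= /px /py inDl !inZl !inDr !inZr !inN (inC b a).
  have E2 : alpha * pg = alpha * z.2 + k * m by rewrite /pg /m; field.
  rewrite E2; apply: (mulIf (expf_neq0 2 k2)); rewrite -Hroot /c /i -/a -/b; field => //.
have e1 : px - z.1.1 = - (k *: py).
  rewrite -/a /px /py.
  have -> : i *: a + c *: b - a = (i - 1) *: a + c *: b by rewrite scalerBl scale1r addrAC.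
  rewrite scalerDr !scalerA opprD -!scaleNr.
  by congr (_ *: _ + _ *: _); rewrite /c /i /GRing.scale /=; field.
have e2 : py - z.1.2 = - (k *: px).
  rewrite -/b /px /py.
  have -> : c *: a + i *: b - b = c *: a + (i - 1) *: b by rewrite scalerBl scale1r addrA.
  rewrite scalerDr !scalerA opprD -!scaleNr.
  by congr (_ *: _ + _ *: _); rewrite /c /i /GRing.scale /=; field.
have e3 : pg - z.2 = k * alpha / beta ^+ 2 by rewrite /pg; ring.
have [H1 H2] := proj_ok z ((px, py), pg) k Cp k1 e1 e2 e3.
by exists ((px, py), pg).
Qed.


Lemma quad (A B D : R) : 0 < A -> 0 <= D -> exists t, A * t ^+ 2 + B * t = D.
Proof.
move=> A0 D0; set s := Num.sqrt (B ^+ 2 + 4 * A * D).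
have hs : s ^+ 2 = B ^+ 2 + 4 * A * D.
  rewrite sqr_sqrtr //; apply: addr_ge0; first exact: sqr_ge0.
  by rewrite !mulr_ge0 // ltW.
exists ((- B + s) / (2 * A)).
apply/eqP; rewrite -subr_eq0.
have An : A != 0 by rewrite lt0r_neq0.
have -> : A * ((- B + s) / (2 * A)) ^+ 2 + B * ((- B + s) / (2 * A)) - D
   = (s ^+ 2 - (B ^+ 2 + 4 * A * D)) / (4 * A) by field.
by rewrite hs subrr mul0r.
Qed.

Lemma lin_sum (g : X -> R) : (forall (a : R) x y, g (a *: x + y) = a * g x + g y) ->
  forall N (c : 'I_N -> R) (v : 'I_N -> X), g (\sum_(k < N) c k *: v k) = \sum_(k < N) c k * g (v k).
Proof.
move=> gl; have g0 : g 0 = 0.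
  have := gl 1 0 0; rewrite scaler0 addr0 mul1r => h; lra.
elim=> [|N IH] c v; first by rewrite !big_ord0.
rewrite !big_ord_recr /= addrC gl IH addrC //.
Qed.

Lemma kernel_vec (n : nat) (g1 g2 : 'I_n -> X -> R) :
  infinite_dimensional X ->
  (forall i (a : R) x y, g1 i (a *: x + y) = a * g1 i x + g1 i y) ->
  (forall i (a : R) x y, g2 i (a *: x + y) = a * g2 i x + g2 i y) ->
  exists u : X, u != 0 /\ forall i, g1 i u = 0 /\ g2 i u = 0.
Proof.
move=> Hinf l1 l2.
have [v Hv] := Hinf (n + n).+1.
pose A1 : 'M[R]_((n + n).+1, n) := \matrix_(k, i) g1 i (v k).
pose A2 : 'M[R]_((n + n).+1, n) := \matrix_(k, i) g2 i (v k).
pose A := row_mx A1 A2.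
pose K := kermx A.
have rK : \rank K != 0%N.
  rewrite /K mxrank_ker; have := rank_leq_col A; rewrite subn_eq0 -ltnNge.
  by move=> h; apply: (leq_ltn_trans h).
have Knz : K != 0 by apply: contra rK => /eqP ->; rewrite mxrank0.
have [r hr] : exists r, row r K != 0.
  case: (boolP [exists r, row r K != 0]) => [/existsP //|/existsPn H].
  move/negP: Knz; case.
  apply/eqP/row_matrixP => r; rewrite row0; move: (H r); rewrite negbK => /eqP //.
set c := row r K.
have cA : c *m A = 0 by rewrite /c -row_mul /K mulmx_ker row0.
move: cA; rewrite /A mul_mx_row => /eqP; rewrite row_mx_eq0 => /andP [/eqP c1 /eqP c2].
exists (\sum_(k < (n + n).+1) c 0 k *: v k); split.
  apply/negP => /eqP h; have := Hv _ h => hc; move/negP: hr; apply.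
  by apply/eqP/rowP => k; rewrite hc mxE.
move=> i; split.
  rewrite (@lin_sum (g1 i) (l1 i)).
  have h := congr1 (fun M : 'M[R]_(1, n) => M 0 i) c1; rewrite !mxE in h; apply: etrans h.
  by apply: eq_bigr => k _; rewrite /A1 !mxE.
rewrite (@lin_sum (g2 i) (l2 i)).
have h := congr1 (fun M : 'M[R]_(1, n) => M 0 i) c2; rewrite !mxE in h; apply: etrans h.
by apply: eq_bigr => k _; rewrite /A2 !mxE.
Qed.


Lemma weak_all : infinite_dimensional X -> weak_closure beta C = setT.
Proof.
move=> Hinf; apply/predeqP => z; split => // _.
move=> n f e Hf e0.
have fl : forall i (a : R) (p q : T3), f i (tadd (tscale a p) q) = a * f i p + f i q.
  by move=> i; case: (Hf i).
have f0 : forall i, f i ((0, 0), 0) = 0.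
  move=> i; have := fl i 1 ((0, 0), 0) ((0, 0), 0).
  rewrite /tadd /tscale /= !scaler0 !addr0 mulr0 mul1r => h; lra.
pose g1 i (x : X) := f i ((x, 0), 0).
pose g2 i (x : X) := f i ((0, x), 0).
have l1 : forall i (a : R) x y, g1 i (a *: x + y) = a * g1 i x + g1 i y.
  move=> i a x y; have := fl i a ((x, 0), 0) ((y, 0), 0).
  by rewrite /tadd /tscale /= !scaler0 mulr0 !addr0.
have l2 : forall i (a : R) x y, g2 i (a *: x + y) = a * g2 i x + g2 i y.
  move=> i a x y; have := fl i a ((0, x), 0) ((0, y), 0).
  by rewrite /tadd /tscale /= !scaler0 mulr0 !addr0.
have [u [unz hu]] := @kernel_vec n g1 g2 Hinf l1 l2.
have fu : forall i (s : R), f i ((u, s *: u), 0) = 0.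
  move=> i s; have := fl i 1 ((u, 0), 0) ((0, s *: u), 0).
  rewrite /tadd /tscale /= scale1r !scaler0 addr0 add0r mulr0 addr0 mul1r => ->.
  have := fl i s ((0, u), 0) ((0, 0), 0).
  rewrite /tadd /tscale /= !scaler0 !addr0 mulr0 => ->.
  by rewrite f0 addr0; have [h1 h2] := hu i; rewrite /g1 /g2 in h1 h2; rewrite h1 h2 mulr0 addr0.
case: z => [[x y] g].
have [s s1 sD] : exists2 s : R, s ^+ 2 = 1 & 0 <= s * (alpha * g - inner x y).
  case: (lerP (inner x y) (alpha * g)) => h.
    by exists 1; [rewrite expr1n | rewrite mul1r subr_ge0].
  by exists (-1); [rewrite sqrrN expr1n | rewrite mulN1r oppr_ge0 subr_le0 ltW].
have A0 : 0 < `|u| ^+ 2 by rewrite exprn_gt0 // normr_gt0.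
have [t ht] := @quad _ (inner x u + s * inner u y) _ A0 sD.
exists (tadd (tscale t ((u, s *: u), 0)) ((x, y), g)); last first.
  by move=> i; rewrite fl fu mulr0 add0r subrr normr0.
rewrite /C /C_alpha /tadd /tscale /=.
rewrite inDl inZl !inDr !inZr inN.
apply/eqP; rewrite -subr_eq0; apply/eqP.
transitivity (s * (`|u| ^+ 2 * t ^+ 2 + (inner x u + s * inner u y) * t - s * (alpha * g - inner x y))
  + (1 - s ^+ 2) * (t * inner u y - (alpha * g - inner x y))).
  ring.
by rewrite ht s1 subrr; ring.
Qed.

End Main.

Theorem mainTheorem4 (R : realType) (X : completeNormedModType R)
  (inner : X -> X -> R) (alpha beta : R) :
  is_inner_product inner -> alpha != 0 -> 0 < beta ->
  let C := C_alpha inner alpha in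
  (tclosed beta C /\
   (infinite_dimensional X ->
      ~ weakly_closed beta C /\ weak_closure beta C = setT)) /\
  (prox_regular inner beta C /\
   forall xb, C xb -> exists2 delta : R, 0 < delta &
     forall z, tdist beta z xb < delta ->
       exists p, metric_proj beta C z p /\ forall q, metric_proj beta C z q -> q = p).
Proof.
move=> Hin Ha Hb C; split; [split | split].
- exact: closedC.
- move=> Hinf; have W : weak_closure beta C = setT by apply: weak_all.
  split => //; move=> Hw.
  have : C ((0, 0), 1).
    apply: Hw; rewrite W //.
  rewrite /C /C_alpha /= => h; have a0 : alpha = 0.
    by have := @in0l _ _ _ Hin 0; rewrite h => /eqP; rewrite mulf_eq0 oner_eq0 orbF => /eqP.
  by move: Ha; rewrite a0 eqxx.
- exact: proxC.
- move=> xb Cxb; exact: proj_exists.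
Qed.
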